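(* Let $n\ge2$ and $\alpha\in[0,1)$ with $\alpha\le1/n$. For $x,y>0$ put $Q_\alpha=Q_\alpha(x,y)=e^{\mathrm{i}\pi\alpha/2}x+e^{-\mathrm{i}\pi\alpha/2}y$ and $$F^\alpha_{n,0}(x,y)=\sum_{A\in\mathcal A_n,\ \mu(A)=0}Q_\alpha^{2\nu(A)}\,\overline{Q_\alpha}^{\,n(n-1)-2\nu(A)}.$$ Then $F^\alpha_{n,0}(x,y)>0$ for all $x,y>0$.
   Context: $\mathcal A_n$ is the set of $n\times n$ alternating sign matrices: matrices with entries in $\{0,1,-1\}$ such that every row and every column sums to $1$ and the nonzero entries in each row and each column alternate in sign. For $A=(A_{ij})\in\mathcal A_n$, $\mu(A)$ is the number of entries equal to $-1$, and $\nu(A)=\sum_{1\le i<i'\le n,\ 1\le j<j'\le n}A_{ij}A_{i'j'}$. (Matrices with $\mu(A)=0$ are exactly the $n\times n$ permutation matrices.) *)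

(* Defs.v *)
From HB Require Import structures.
From mathcomp Require Import all_boot all_order all_algebra.
From mathcomp Require Import reals trigo.
From mathcomp Require Import complex.
Set Implicit Arguments. Unset Strict Implicit. Unset Printing Implicit Defensive.
Import Order.TTheory GRing.Theory Num.Theory.
Local Open Scope ring_scope.

Section ASM.
Variable n : nat.

Definition alternating (s : seq int) : bool :=
  sorted (fun a b => a * b == -1) [seq a <- s | a != 0].

Definition row_seq (A : 'M[int]_n) (i : 'I_n) : seq int := [seq A i j | j <- enum 'I_n].
Definition col_seq (A : 'M[int]_n) (j : 'I_n) : seq int := [seq A i j | i <- enum 'I_n].

Definition is_asm (A : 'M[int]_n) : bool :=
  [&& [forall i, forall j, A i j \in [:: 0; 1; -1]],
      [forall i, \sum_(j < n) A i j == 1],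
      [forall j, \sum_(i < n) A i j == 1],
      [forall i, alternating (row_seq A i)] &
      [forall j, alternating (col_seq A j)]].

Definition mu (A : 'M[int]_n) : nat :=
  #|[set ij : 'I_n * 'I_n | A ij.1 ij.2 == -1]|.

Definition nu (A : 'M[int]_n) : int :=
  \sum_(i < n) \sum_(i' < n | (i < i')%N) \sum_(j < n) \sum_(j' < n | (j < j')%N)
     A i j * A i' j'.

(* encoding of {0,1,-1}-valued matrices by a finite type, to sum over A_n *)
Definition sign_of (k : 'I_3) : int :=
  match val k with 0%N => 0 | 1%N => 1 | _ => -1 end.
Definition mx_of (B : 'M['I_3]_n) : 'M[int]_n := map_mx sign_of B.

End ASM.

Definition expi (R : realType) (t : R) : R[i] := (cos t +i* sin t)%C.

Definition Qa (R : realType) (alpha x y : R) : R[i] :=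
  expi (pi * alpha / 2) * (x%:C)%C + expi (- (pi * alpha / 2)) * (y%:C)%C.

(* F^alpha_{n,0}(x,y): the sum over A in A_n with mu(A) = 0; every A in A_n is
   mx_of B for exactly one B (sign_of is injective), so summing over B is summing over A_n. *)
Definition F0 (R : realType) (n : nat) (alpha x y : R) : R[i] :=
  \sum_(B : 'M['I_3]_n | is_asm (mx_of B) && (mu (mx_of B) == 0%N))
     Qa alpha x y ^ (2 * nu (mx_of B)) *
     (Qa alpha x y)^* ^ ((n * (n - 1))%N%:Z - 2 * nu (mx_of B)).

(* Main.v *)
Require Import Defs.
From HB Require Import structures.
From mathcomp Require Import all_boot all_order all_algebra all_fingroup.
From mathcomp Require Import reals trigo.
From mathcomp Require Import complex.
From mathcomp Require Import ring lra zify.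
Import Order.TTheory GRing.Theory Num.Theory.
Local Open Scope ring_scope.

Section Anal.
Variable R : realType.
Implicit Types a b t : R.

Lemma expiD a b : expi a * expi b = expi (a + b).
Proof. rewrite /expi; simpc; rewrite cosD sinD; congr Complex; ring. Qed.

Lemma expi0 : expi (0 : R) = 1.
Proof. by rewrite /expi cos0 sin0. Qed.

Lemma expiX a m : expi a ^+ m = expi (a *+ m).
Proof.
elim: m => [|m IH]; first by rewrite expr0 mulr0n expi0.
by rewrite exprS IH expiD mulrS.
Qed.

Lemma conj_expi a : ((expi a)^*)%C = expi (- a).
Proof. by rewrite /expi; simpc; rewrite cosN sinN. Qed.

Lemma sum_complex (m : nat) (f g : 'I_m -> R) :
  \sum_(j < m) (f j +i* g j)%C = ((\sum_(j < m) f j) +i* (\sum_(j < m) g j))%C.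
Proof.
elim: m f g => [|m IH] f g; first by rewrite !big_ord0.
by rewrite !big_ord_recr /= IH; simpc.
Qed.

Definition Cs (psi : R) (k : nat) :=
  \sum_(j < k.+1) cos (psi * (j%:R *+ 2 - k%:R)).
Definition Ss (psi : R) (k : nat) :=
  \sum_(j < k.+1) sin (psi * (j%:R *+ 2 - k%:R)).

Lemma Ss0 psi k : Ss psi k = 0.
Proof.
have : Ss psi k = - Ss psi k.
  rewrite {1}/Ss (reindex_inj rev_ord_inj) /= /Ss -sumrN.
  apply: eq_bigr => j _; rewrite -sinN; congr sin.
  rewrite subSS natrB; last by rewrite -ltnS.
  ring.
by move=> h; lra.
Qed.

Lemma Cs_tel psi k : sin psi * Cs psi k = sin (psi * k.+1%:R).
Proof.
have E : forall j : nat, sin psi * cos (psi * (j%:R *+ 2 - k%:R)) * 2 =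
   sin (psi * ((j.+1)%:R *+ 2 - k%:R - 1)) - sin (psi * (j%:R *+ 2 - k%:R - 1)).
  move=> j.
  have -> : psi * ((j.+1)%:R *+ 2 - k%:R - 1) = psi * (j%:R *+ 2 - k%:R) + psi.
    by rewrite -natr1; ring.
  have -> : psi * (j%:R *+ 2 - k%:R - 1) = psi * (j%:R *+ 2 - k%:R) - psi.
    by ring.
  rewrite sinD sinB; ring.
suff : sin psi * Cs psi k * 2 = sin (psi * k.+1%:R) * 2 by lra.
rewrite /Cs mulr_sumr mulr_suml.
rewrite (eq_bigr (fun j : 'I_k.+1 => let f := fun j : nat =>
   sin (psi * (j%:R *+ 2 - k%:R - 1)) in f j.+1 - f j)); last by move=> j _; rewrite E.
rewrite -(big_mkord xpredT (fun j => let f := fun j : nat =>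
   sin (psi * (j%:R *+ 2 - k%:R - 1)) in f j.+1 - f j)).
rewrite telescope_sumr // /=.
have -> : psi * (k.+1%:R *+ 2 - k%:R - 1) = psi * k.+1%:R by rewrite -natr1; ring.
have -> : psi * (0%:R *+ 2 - k%:R - 1) = - (psi * k.+1%:R) by rewrite -natr1; ring.
rewrite sinN; ring.
Qed.

Lemma Cs_gt0 psi k : `|psi| * k.+1%:R < pi -> 0 < Cs psi k.
Proof.
wlog hpsi : psi / 0 <= psi.
  move=> W h; case: (leP 0 psi) => hp; first exact: W.
  have -> : Cs psi k = Cs (- psi) k.
    by apply: eq_bigr => j _; rewrite mulNr cosN.
  apply: W; first lra.
  by rewrite normrN.
rewrite ger0_norm // => h.
case: (ltgtP psi 0) => hp; first lra.
- have s1 : 0 < sin psi.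
    apply: sin_gt0_pi; apply/andP; split => //.
    have : psi <= psi * k.+1%:R by rewrite ler_peMr // ler1n.
    lra.
  have s2 : 0 < sin (psi * k.+1%:R).
    apply: sin_gt0_pi; apply/andP; split => //.
    by rewrite mulr_gt0 // ltr0n.
  by rewrite -(pmulr_rgt0 _ s1) Cs_tel.
- rewrite /Cs hp (eq_bigr (fun=> 1)); last by move=> j _; rewrite mul0r cos0.
  by rewrite sumr_const card_ord ltr0n.
Qed.


End Anal.
Arguments Cs {R}. Arguments Ss {R}.
Arguments Cs_gt0 {R}.

Section S.
Variable R : realType.
Definition hk (Q : R[i]) (k : nat) :=
  \sum_(j < k.+1) Q ^+ (2 * j) * (Q^*)%C ^+ (2 * (k - j)).

Lemma hk_polar (rho th : R) k :
  hk (rho%:C * expi th)%C k = ((rho ^+ (2 * k))%:C * (Cs (th *+ 2) k)%:C)%C.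
Proof.
have Cc : ((rho%:C * expi th)^*)%C = (rho%:C * expi (- th))%C.
  by rewrite /expi cosN sinN -!complexr0; simpc.
rewrite /hk Cc.
transitivity (\sum_(j < k.+1) ((rho ^+ (2 * k))%:C *
    expi (th *+ 2 * (j%:R *+ 2 - k%:R))))%C.
  apply: eq_bigr => j _.
  have hj : (j <= k)%N by rewrite -ltnS.
  rewrite !exprMn !expiX mulrACA.
  rewrite (@expiD R (th *+ (2 * j))).
  rewrite -(exprD (rho%:C)%C).
  rewrite -mulnDr subnKC //.
  rewrite -(rmorphXn (real_complex R)).
  have -> : th *+ (2 * j) + - th *+ (2 * (k - j)) = th *+ 2 * (j%:R *+ 2 - k%:R).
    rewrite -[th *+ (2 * j)]mulr_natr -[- th *+ _]mulr_natr -[th *+ 2]mulr_natr -[j%:R *+ 2]mulr_natr !natrM natrB //; ring.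
  reflexivity.
rewrite -mulr_sumr. congr (_ * _).
rewrite /expi sum_complex. rewrite -/(Cs _ _) -/(Ss _ _) Ss0. reflexivity.
Qed.

End S.
Arguments hk {R}.
Arguments hk_polar {R}.

Section S2.
Variable R : realType.

Lemma Qa_polar (alpha x y : R) : 0 <= alpha -> alpha < 1 -> 0 < x -> 0 < y ->
  exists rho th : R, [/\ 0 < rho, Qa alpha x y = (rho%:C * expi th)%C,
    (alpha = 0 -> th = 0) &
    (0 < alpha -> - (pi * alpha / 2) < th < pi * alpha / 2)].
Proof.
move=> ha0 ha1 hx hy.
set phi := pi * alpha / 2.
have hpi := @pi_gt0 R.
have hphi0 : 0 <= phi by rewrite /phi; apply: divr_ge0 => //; apply: mulr_ge0 => //; lra.
have hphi1 : phi < pi / 2.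
  rewrite /phi ltr_pM2r // ?invr_gt0 //; rewrite -subr_gt0.
  have -> : pi - pi * alpha = pi * (1 - alpha) by ring.
  by apply: mulr_gt0 => //; lra.
set c := cos phi; set s := sin phi.
have hc : 0 < c by apply: cos_gt0_pihalf; apply/andP; split; lra.
have hs : 0 <= s by apply: sin_ge0_pi; apply/andP; split; lra.
set a := (x + y) * c; set b := (x - y) * s.
have ha : 0 < a by apply: mulr_gt0 => //; lra.
have EQ : Qa alpha x y = (a +i* b)%C.
  rewrite /Qa /expi cosN sinN -/phi -/c -/s -!complexr0; simpc.
  rewrite /a /b; congr Complex; ring.
set t := b / a; set th := atan t.
have hct : 0 < cos th.
  by apply: cos_gt0_pihalf; rewrite atan_gtNpi2 atan_ltpi2.
have hst : sin th = t * cos th.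
  by have := atanK t; rewrite /tan -/th => <-; rewrite divfK // gt_eqF.
exists (a / cos th), th; split.
- by rewrite divr_gt0.
- rewrite EQ /expi -!complexr0; simpc.
  have ct0 : cos th != 0 by rewrite gt_eqF.
  have a0 : a != 0 by rewrite gt_eqF.
  congr Complex; rewrite ?hst /t; field; rewrite ?ct0 ?a0 // ?andbT.
- move=> a0; rewrite /th /t /b /s /phi a0 mulr0 mul0r sin0 mulr0 mul0r atan0.
  reflexivity.
- move=> apos.
  have hphi0' : 0 < phi by rewrite /phi; apply: divr_gt0 => //; apply: mulr_gt0.
  have hs' : 0 < s by apply: sin_gt0_pihalf; apply/andP; split.
  set T := s / c.
  have hT : T * a = s * (x + y) by rewrite /T /a; field; rewrite gt_eqF.
  have ys := mulr_gt0 hy hs'.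
  have xs := mulr_gt0 hx hs'.
  have htT : t < T by rewrite /t ltr_pdivrMr // hT /b; lra.
  have hTt : - T < t by rewrite /t ltr_pdivlMr // mulNr hT /b; lra.
  have tphi : tan phi = T by [].
  have phiK : atan T = phi.
    rewrite -tphi tanK // in_itv /=; apply/andP; split; lra.
  apply/andP; split.
  + by rewrite -phiK -atanN; apply: lt_atan.
  + by rewrite -phiK; apply: lt_atan.
Qed.
End S2.
Arguments Qa_polar {R}.

Definition ninv n (s : 'S_n) : nat :=
  (\sum_(i < n) \sum_(i' < n | (i < i')%N) (s i < s i')%N)%N.

Arguments ninv {n}.

Lemma sum_perm_lift (V : nmodType) n (f : 'S_n.+1 -> V) :
  \sum_(s : 'S_n.+1) f s = \sum_(j : 'I_n.+1) \sum_(s : 'S_n) f (lift_perm ord_max j s).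
Proof.
rewrite (partition_big (fun s : 'S_n.+1 => s ord_max) xpredT) //=.
apply: eq_bigr => j0 _.
pose i0 : 'I_n.+1 := ord_max.
rewrite (reindex (lift_perm i0 j0)); last first.
  pose ulsf i (s : 'S_n.+1) k := odflt k (unlift (s i) (s (lift i k))).
  have ulsfK i (s : 'S_n.+1) k: lift (s i) (ulsf i s k) = s (lift i k).
    rewrite /ulsf; have:= neq_lift i k.
    by rewrite -(can_eq (permK s)) => /unlift_some[] ? ? ->.
  have inj_ulsf: injective (ulsf i0 _).
    move=> s; apply: can_inj (ulsf (s i0) s^-1%g) _ => k'.
    by rewrite {1}/ulsf ulsfK !permK liftK.
  exists (fun s => perm (inj_ulsf s)) => [s _ | s].
    by apply/permP=> k'; rewrite permE /ulsf lift_perm_lift lift_perm_id liftK.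
  move/(s _ =P _) => si0; apply/permP=> k.
  case: (unliftP i0 k) => [k'|] ->; rewrite ?lift_perm_id //.
  by rewrite lift_perm_lift -si0 permE ulsfK.
by apply: eq_bigl => s; rewrite lift_perm_id eqxx.
Qed.

Lemma lift_max_widen n (i : 'I_n) : lift ord_max i = widen_ord (leqnSn n) i.
Proof. by apply: val_inj; rewrite /= /bump leqNgt ltn_ord. Qed.

Lemma lift_ltn n (j : 'I_n.+1) (a b : 'I_n) : (lift j a < lift j b)%N = (a < b)%N.
Proof. rewrite /= /bump; case: leqP; case: leqP; lia. Qed.

Lemma lift_ltj n (j : 'I_n.+1) (a : 'I_n) : (lift j a < j)%N = (a < j)%N.
Proof. rewrite /= /bump; case: leqP; lia. Qed.

Lemma count_lt n (s : 'S_n) (j : nat) : (j <= n)%N ->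
  (\sum_(i < n) (s i < j)%N)%N = j.
Proof.
move=> hj.
rewrite (reindex_inj (@perm_inj _ s^-1)) /=.
rewrite (eq_bigr (fun i : 'I_n => (i < j)%N : nat)); last by move=> i _; rewrite permKV.
rewrite -(big_mkord xpredT (fun i => (i < j)%N : nat)).
rewrite (@big_cat_nat _ _ _ j) //=.
rewrite (eq_big_nat _ _ (F2 := fun _ => 1%N)); last by move=> i /andP[_ ->].
rewrite [X in (_ + X)%N](eq_big_nat _ _ (F2 := fun _ => 0%N)); last first.
  by move=> i /andP[h _]; rewrite ltnNge h.
by rewrite !sum_nat_const_nat; lia.
Qed.

Lemma ninv_lift n (j : 'I_n.+1) (s : 'S_n) :
  ninv (lift_perm ord_max j s) = (ninv s + j)%N.
Proof.
rewrite /ninv big_ord_recr /=.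
rewrite [X in (_ + X)%N]big1; last by move=> i hi; exfalso; move: hi; rewrite ltnNge -ltnS ltn_ord.
rewrite addn0 -(@count_lt n s j (ltn_ord j : (j <= n)%N)) -big_split /=.
apply: eq_bigr => i _.
rewrite big_mkcond big_ord_recr /= -big_mkcond /= ltn_ord.
rewrite -!lift_max_widen lift_perm_id !lift_perm_lift lift_ltj.
congr (_ + _)%N.
apply: eq_bigr => i' _.
by rewrite -!lift_max_widen !lift_perm_lift lift_ltn.
Qed.

Section E.
Variable R : realType.

Definition Tt n (Q : R[i]) (s : 'S_n) : R[i] :=
  Q ^ (2 * (ninv s)%:Z) * (Q^*)%C ^ ((n * (n - 1))%N%:Z - 2 * (ninv s)%:Z).

Arguments Tt {n}.

Definition G n (Q : R[i]) := \sum_(s : 'S_n) Tt Q s.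

Lemma Tt_lift n (Q : R[i]) (j : 'I_n.+1) (s : 'S_n) : Q != 0 ->
  Tt Q (lift_perm ord_max j s) = Tt Q s * (Q ^+ (2 * j) * (Q^*)%C ^+ (2 * (n - j))).
Proof.
move=> Q0; rewrite /Tt ninv_lift.
set a := ninv s.
have hj : (j <= n)%N by rewrite -ltnS.
have e1 : 2 * ((a + j)%N%:Z) = 2 * a%:Z + (2 * j)%N%:Z :> int by lia.
have en : (n.+1 * (n.+1 - 1) = n * (n - 1) + 2 * (n - j) + 2 * j)%N.
  have gen : forall m k, (k <= m)%N -> (m.+1 * (m.+1 - 1) = m * (m - 1) + 2 * (m - k) + 2 * k)%N.
    by move=> [|m] k hk; nia.
  exact: gen.
have e2 : ((n.+1 * (n.+1 - 1))%N%:Z - 2 * (a + j)%N%:Z) =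
    ((n * (n - 1))%N%:Z - 2 * a%:Z) + (2 * (n - j))%N%:Z :> int by lia.
rewrite e2 e1.
rewrite (exprzDr (x := Q)) ?unitfE // (exprzDr (x := (Q^*)%C)) ?unitfE ?conjc_eq0 //.
rewrite -(exprnP Q) -(exprnP (Q^*)%C).
rewrite mulrACA.
reflexivity.
Qed.

Lemma G_rec n (Q : R[i]) : Q != 0 -> G n.+1 Q = hk Q n * G n Q.
Proof.
move=> Q0; rewrite /G sum_perm_lift /hk mulr_suml.
apply: eq_bigr => j _.
rewrite mulr_sumr; apply: eq_bigr => s _.
by rewrite Tt_lift // mulrC.
Qed.

Lemma G0 (Q : R[i]) : G 0 Q = 1.
Proof.
rewrite /G (big_pred1 (1%g : 'S_0)); last by move=> s; symmetry; apply/eqP/permP => -[].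
rewrite /Tt /ninv big_ord0 mulr0 subr0 !expr0z mulr1.
reflexivity.
Qed.

Lemma G_prod n (Q : R[i]) : Q != 0 -> G n Q = \prod_(k < n) hk Q k.
Proof.
move=> Q0; elim: n => [|n IH]; first by rewrite G0 big_ord0.
by rewrite G_rec // IH big_ord_recr /= mulrC.
Qed.
End E.
Arguments G {R} n Q.

Section F.
Variable R : realType.

Lemma realC_gt0 (a : R) : 0 < a -> (0 : R[i]) < (a%:C)%C.
Proof. by move=> ha; rewrite ltcE /= eqxx ha. Qed.

Lemma G_pos n (alpha x y : R) : 0 <= alpha -> alpha < 1 -> alpha * n%:R <= 1 ->
  0 < x -> 0 < y -> 0 < G n (Qa alpha x y).
Proof.
move=> ha0 ha1 han hx hy.
have [rho [th [hr EQ h0 h1]]] := Qa_polar alpha x y ha0 ha1 hx hy.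
have Q0 : Qa alpha x y != 0.
  rewrite EQ mulf_neq0 //; first by rewrite gt_eqF // realC_gt0.
  have := @expiD R th (- th); rewrite subrr expi0 => E1.
  apply/eqP => E2; move: E1; rewrite E2 mul0r => /eqP; rewrite eq_sym oner_eq0.
  by [].
rewrite G_prod // EQ.
apply: prodr_gt0 => k _.
rewrite hk_polar; apply: mulr_gt0; apply: realC_gt0.
  by apply: exprn_gt0.
apply: Cs_gt0.
have hpi := @pi_gt0 R.
have hk : (k.+1%:R : R) <= n%:R by rewrite ler_nat.
case: (ltgtP alpha 0) => ha; first lra.
- have [h2 h3] := andP (h1 ha).
  have hth : `|th *+ 2| < pi * alpha.
    have : `|th| < pi * alpha / 2 by rewrite ltr_norml h2 h3.
    rewrite normrMn; lra.
  have hk0 : (0 : R) < k.+1%:R by rewrite ltr0n.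
  set P := `|th *+ 2|.
  have hn0 : (0:R) < n%:R by apply: lt_le_trans hk0 hk.
  have s1 : P * k.+1%:R <= P * n%:R := ler_wpM2l (normr_ge0 _) hk.
  have s2 : P * n%:R < pi * alpha * n%:R by rewrite ltr_pM2r.
  have s3 : pi * alpha * n%:R <= pi.
    rewrite -mulrA; have := ler_wpM2l (ltW hpi) han; by rewrite mulr1.
  lra.
- by rewrite (h0 ha) mul0rn normr0 mul0r.
Qed.
End F.

Definition one3 : 'I_3 := Ordinal (isT : (1 < 3)%N).

Definition Bof n (s : 'S_n) : 'M['I_3]_n :=
  \matrix_(i, j) (if s i == j then one3 else ord0).

Arguments Bof {n}.

Lemma mx_of_Bof n (s : 'S_n) i j : mx_of (Bof s) i j = (s i == j)%:Z.
Proof. by rewrite /mx_of !mxE; case: (s i == j). Qed.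

Lemma sign_of_inj : injective sign_of.
Proof.
move=> [[|[|[|a]]] ha] [[|[|[|b]]] hb] //= E; try by apply: val_inj.
Qed.

Lemma sum_delta n (a : 'I_n) (g : 'I_n -> int) :
  \sum_(j < n) (a == j)%:Z * g j = g a.
Proof.
rewrite (bigD1 a) //= eqxx mul1r big1 ?addr0 // => j hj.
by rewrite eq_sym (negbTE hj) mul0r.
Qed.

Arguments sum_delta {n}.

Lemma sum_delta1 n (a : 'I_n) : \sum_(j < n) (a == j)%:Z = 1.
Proof.
rewrite -[RHS](sum_delta a (fun _ => 1)); apply: eq_bigr => j _; by rewrite mulr1.
Qed.

Arguments sum_delta1 {n}.

Lemma filt_delta n (a : 'I_n) :
  [seq z <- [seq (a == j)%:Z | j <- enum 'I_n] | z != 0] = [:: 1].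
Proof.
rewrite filter_map.
rewrite (eq_filter (a2 := pred1 a)); last by move=> j /=; rewrite [j == a]eq_sym; case: (a == j).
by rewrite filter_pred1_uniq ?enum_uniq ?mem_enum //= eqxx.
Qed.

Lemma P_Bof n (s : 'S_n) : is_asm (mx_of (Bof s)) && (mu (mx_of (Bof s)) == 0%N).
Proof.
apply/andP; split.
  apply/and5P; split.
  - by apply/forallP => i; apply/forallP => j; rewrite mx_of_Bof; case: (s i == j).
  - apply/forallP => i; rewrite (eq_bigr (fun j => (s i == j)%:Z)) ?sum_delta1 //.
    by move=> j _; rewrite mx_of_Bof.
  - apply/forallP => j; rewrite (eq_bigr (fun i => (s^-1%g j == i)%:Z)) ?sum_delta1 //.
    by move=> i _; rewrite mx_of_Bof (canF_eq (permK s)) eq_sym.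
  - apply/forallP => i; rewrite /Defs.alternating /row_seq.
    rewrite (eq_map (g := fun j => (s i == j)%:Z)); last by move=> j; rewrite mx_of_Bof.
    by rewrite filt_delta.
  - apply/forallP => j; rewrite /Defs.alternating /col_seq.
    rewrite (eq_map (g := fun i => (s^-1%g j == i)%:Z)); last first.
      by move=> i; rewrite mx_of_Bof (canF_eq (permK s)) eq_sym.
    by rewrite filt_delta.
rewrite /mu cards_eq0; apply/eqP/setP => ij; rewrite !inE mx_of_Bof.
by case: (s ij.1 == ij.2).
Qed.

Lemma Bof_inj n : injective (@Bof n).
Proof.
move=> s1 s2 E; apply/permP => i; apply/eqP.
have := congr1 (fun B : 'M['I_3]_n => B i (s1 i)) E.
by rewrite !mxE eqxx; case: (s2 i =P s1 i) => [->|_ /(congr1 val)] //.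
Qed.

Lemma two_ones n (F : 'I_n -> int) a b : (forall k, 0 <= F k) ->
  \sum_k F k = 1 -> F a = 1 -> F b = 1 -> a = b.
Proof.
move=> h0 hs ha hb; apply/eqP; apply/negPn/negP => hab.
move: hs; rewrite (bigD1 a) //= (bigD1 b) 1?eq_sym //= ha hb.
have : 0 <= \sum_(i < n | (i != a) && (i != b)) F i by apply: sumr_ge0.
set S := (\sum_(i < n | _) F i); move=> hS hE; have e : S = (1 + (1 + S)) - 2 by ring. rewrite hE in e. by move: hS; rewrite e.
Qed.

Lemma exists_one n (F : 'I_n -> int) : (forall k, (F k == 0) || (F k == 1)) ->
  \sum_k F k = 1 -> exists k, F k = 1.
Proof.
move=> h01 hs; case: (pickP (fun k => F k == 1)) => [k /eqP hk | hn]; first by exists k.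
move: hs; rewrite big1 // => k _; have := h01 k; rewrite hn orbF; exact/eqP.
Qed.

Lemma P_inv n (B : 'M['I_3]_n) : is_asm (mx_of B) && (mu (mx_of B) == 0%N) ->
  exists s, B = Bof s.
Proof.
set A := mx_of B.
case/andP => /and5P[h1 h2 h3 _ _] hmu.
have hneg : forall i j, A i j != -1.
  move=> i j; move: hmu; rewrite /mu cards_eq0 => /eqP /setP /(_ (i, j)).
  by rewrite !inE /= => ->.
have h01 : forall i j, (A i j == 0) || (A i j == 1).
  move=> i j; move/forallP: h1 => /(_ i) /forallP /(_ j).
  have := hneg i j; rewrite !inE; lia.
have hge : forall i j, 0 <= A i j by move=> i j; have := h01 i j; lia.
have row1 : forall i, \sum_j A i j = 1 by move=> i; move/forallP: h2 => /(_ i) /eqP.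
have col1 : forall j, \sum_i A i j = 1 by move=> j; move/forallP: h3 => /(_ j) /eqP.
have : forall i, exists j, A i j = 1 by move=> i; apply: exists_one (row1 i).
case/fin_all_exists => f hf.
have finj : injective f.
  move=> i1 i2 E.
  apply: (@two_ones _ (fun i => A i (f i1)) i1 i2 (fun k => hge k _) (col1 _) (hf i1)).
  by rewrite /= E.
exists (perm finj); apply/matrixP => i j; rewrite mxE permE.
apply: sign_of_inj.
have -> : sign_of (B i j) = A i j by rewrite /A /mx_of mxE.
case: eqP => [<-|ne]; first by rewrite hf.
case/orP: (h01 i j) => /eqP hA; first by rewrite hA.
exfalso; apply: ne.
exact: (@two_ones _ (fun j => A i j) _ _ (hge i) (row1 i) (hf i) hA).
Qed.

Lemma nu_Bof n (s : 'S_n) : nu (mx_of (Bof s)) = (ninv s)%:Z.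
Proof.
rewrite /nu /ninv.
rewrite (big_morph Posz PoszD (erefl (Posz 0))).
apply: eq_bigr => i _.
rewrite (big_morph Posz PoszD (erefl (Posz 0))).
apply: eq_bigr => i' _.
rewrite (eq_bigr (fun j => (s i == j)%:Z *
    \sum_(j' < n | (j < j')%N) (s i' == j')%:Z)); last first.
  by move=> j _; rewrite mulr_sumr; apply: eq_bigr => j' _; rewrite !mx_of_Bof.
rewrite (sum_delta (s i) (fun j => \sum_(j' < n | (j < j')%N) (s i' == j')%:Z)).
rewrite big_mkcond (bigD1 (s i')) //= eqxx big1 ?addr0.
  by case: (s i < s i')%N.
by move=> j hj; rewrite eq_sym (negbTE hj); case: (_ < _)%N.
Qed.

Lemma F0_G (R : realType) (n : nat) (alpha x y : R) :
  F0 n alpha x y = G n (Qa alpha x y).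
Proof.
rewrite /F0.
transitivity (\sum_(B in [set Bof s | s in [set: 'S_n]])
   (Qa alpha x y ^ (2 * nu (mx_of B)) *
     (Qa alpha x y)^*%C ^ ((n * (n - 1))%N%:Z - 2 * nu (mx_of B)))).
  apply: eq_bigl => B; symmetry; apply/imsetP/idP => [[s _ ->]|hB].
    exact: P_Bof.
  by have [s ->] := @P_inv _ B hB; exists s.
rewrite big_imset /=; last by move=> s1 s2 _ _; apply: Bof_inj.
rewrite /G; apply: eq_big => [s|s _]; first by rewrite inE.
rewrite nu_Bof /Tt.
reflexivity.
Qed.

Theorem proposition3 (R : realType) (n : nat) (alpha : R) :
  (2 <= n)%N -> 0 <= alpha -> alpha < 1 -> alpha <= n%:R^-1 ->
  forall x y : R, 0 < x -> 0 < y -> 0 < F0 n alpha x y.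
Proof.
move=> hn ha0 ha1 han x y hx hy.
rewrite F0_G; apply: G_pos => //.
have n0 : (n%:R : R) != 0 by rewrite pnatr_eq0 -lt0n; apply: leq_trans hn.
have := ler_wpM2r (ler0n R n) han; by rewrite mulVf.
Qed.
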